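(* Let $(P_n(x))_{n \ge 0}$ be a splitting sequence with binary string $s_0 s_1 s_2 \ldots$, and let $m \in \mathbb{N}_0$ be such that $P_m(x)$ is irreducible in $\mathbb{Z}[x]$. Then for every $k \in \mathbb{N}_0$, $P_{m+k}(x)$ divides $P_m(x^{2^\ell})$ in $\mathbb{Z}[x]$, where $\ell = |\{ i \in \{m, \dots, m+k-1\} : s_i = L\}|$.
   Context: Splitting sequence of an irreducible $P \in \mathbb{Z}[x]$: a sequence $(P_n)_{n \ge 0}$ in $\mathbb{Z}[x]$ with $P_0 = P$ such that for each $n$: if $P_n$ is irreducible in $\mathbb{Z}[x]$, then $P_{n+1}(x) = P_n(x^2)$; if $P_n$ is reducible, then (as $n \ge 1$, $P_{n-1}$ is irreducible and $P_n(x) = P_{n-1}(x^2)$ factors in $\mathbb{Z}[x]$ as a product of exactly two irreducibles) $P_{n+1}$ is one of these two irreducible factors. Its binary string is $s_0 s_1 \ldots$ with $s_n = L$ if $P_n$ is irreducible and $s_n = S$ otherwise. *)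

(* Defs.v *)
From mathcomp Require Import all_boot all_order all_algebra.
Set Implicit Arguments. Unset Strict Implicit. Unset Printing Implicit Defensive.
Import GRing.Theory.
Local Open Scope ring_scope.

(* NB: mathcomp's [irreducible_poly] ignores content, so it is NOT used. *)
Definition irredZ (p : {poly int}) : Prop :=
  [/\ p != 0, p \isn't a GRing.unit &
      forall q r : {poly int}, p = q * r ->
        q \is a GRing.unit \/ r \is a GRing.unit].

Definition sq_sub (p : {poly int}) : {poly int} := p \Po 'X^2.

Definition splitting_seq (P : nat -> {poly int}) : Prop :=
  irredZ (P 0%N) /\
  forall n : nat,
    (irredZ (P n) -> P n.+1 = sq_sub (P n)) /\
    (~ irredZ (P n) ->
       exists A B : {poly int}, [/\ irredZ A, irredZ B, P n = A * B &
                                   (P n.+1 = A \/ P n.+1 = B)]).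

(* Binary string of P: s n = true encodes L (P n irreducible), false encodes S. *)
Definition binary_string (P : nat -> {poly int}) (s : nat -> bool) : Prop :=
  forall n : nat, s n = true <-> irredZ (P n).

(* Main.v *)
Require Import Defs.
From mathcomp Require Import all_boot all_order all_algebra.
Local Open Scope ring_scope.
Import GRing.Theory.

Lemma comp_sq (p : {poly int}) (l : nat) :
  p \Po 'X^(2 ^ l.+1) = (p \Po 'X^(2 ^ l)) \Po 'X^2.
Proof.
rewrite -comp_polyA comp_Xn_poly -exprM expnS mulnC //.
Qed.

Theorem lemma3p14 (P : nat -> {poly int}) (s : nat -> bool) (m : nat) :
  splitting_seq P -> binary_string P s -> irredZ (P m) ->
  forall k : nat,
    let l := (\sum_(m <= i < m + k) (s i : nat))%N in
    exists Q : {poly int}, P m \Po 'X^(2 ^ l) = Q * P (m + k)%N.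
Proof.
move=> [_ HS] HB _ k; elim: k => [|k [Q HQ]] /=.
  by exists 1; rewrite addn0 big_geq // expn0 expr1 comp_polyXr mul1r.
rewrite addnS big_nat_recr ?leq_addr //=.
case Hs: (s (m + k)%N).
- have Hi : irredZ (P (m + k)%N) by apply/HB.
  rewrite addn1 comp_sq HQ comp_polyM ((HS _).1 Hi).
  by exists (Q \Po 'X^2).
- have Hi : ~ irredZ (P (m + k)%N) by move/HB; rewrite Hs.
  have [A [B [_ _ HAB [->|->]]]] := (HS _).2 Hi; rewrite addn0 HQ HAB.
  + by exists (Q * B); rewrite -mulrA [A * B]mulrC.
  + by exists (Q * A); rewrite mulrA.
Qed.
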